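(* Let $\mathcal{K}$ be a finite-dimensional complex Hilbert space and $\mathcal{E}$ a completely positive trace-preserving map on the operators of $\mathcal{K}$ admitting a Kraus (operator-sum) representation $\mathcal{E}(\rho)=\sum_{i}V_i\rho V_i^\dagger$ in which one term is $V_1=\sqrt{\alpha}\,I$ with $\alpha>0$. Then, viewing $\mathcal{E}$ as a linear map on the space of operators on $\mathcal{K}$, the only eigenvalue of $\mathcal{E}$ of modulus one can be $1$. *)

(* Defs.v *)
From HB Require Import structures.
From mathcomp Require Import all_boot all_order all_algebra.
Set Implicit Arguments. Unset Strict Implicit. Unset Printing Implicit Defensive.
Import Order.TTheory GRing.Theory Num.Theory.
Local Open Scope ring_scope.

(* Operators on K = C^n are n x n matrices over C (a numeric closed field,
   e.g. the complex numbers). *)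

Definition adjmx (C : numClosedFieldType) (n : nat) (A : 'M[C]_n) : 'M[C]_n :=
  map_mx Num.conj A^T.

Definition kraus_map (C : numClosedFieldType) (n m : nat)
  (V : 'I_m -> 'M[C]_n) (rho : 'M[C]_n) : 'M[C]_n :=
  \sum_(i < m) (V i *m rho *m adjmx (V i)).

Definition kraus_trace_preserving (C : numClosedFieldType) (n m : nat)
  (V : 'I_m -> 'M[C]_n) : Prop :=
  \sum_(i < m) (adjmx (V i) *m V i) = 1%:M.

Definition is_eigenvalue (C : numClosedFieldType) (n : nat)
  (E : 'M[C]_n -> 'M[C]_n) (lambda : C) : Prop :=
  exists2 X : 'M[C]_n, X != 0 & E X = lambda *: X.

(* Main.v *)
Require Import Defs.
From HB Require Import structures.
From mathcomp Require Import all_boot all_order all_algebra.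
From mathcomp Require Import ring.
Set Implicit Arguments. Unset Strict Implicit. Unset Printing Implicit Defensive.
Import Order.TTheory GRing.Theory Num.Theory.
Local Open Scope ring_scope.

Section S.
Variable C : numClosedFieldType.

Definition hadj m p (A : 'M[C]_(m,p)) : 'M[C]_(p,m) := map_mx Num.conj A^T.

Lemma hadjM m p q (A : 'M[C]_(m,p)) (B : 'M[C]_(p,q)) : hadj (A *m B) = hadj B *m hadj A.
Proof. by rewrite /hadj trmx_mul map_mxM. Qed.

Lemma hadjK m p (A : 'M[C]_(m,p)) : hadj (hadj A) = A.
Proof. by apply/matrixP=> i j; rewrite !mxE conjCK. Qed.

Lemma hadjZ m p a (A : 'M[C]_(m,p)) : hadj (a *: A) = a^* *: hadj A.
Proof. by apply/matrixP=> i j; rewrite !mxE rmorphM. Qed.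

Lemma hadjD m p (A B : 'M[C]_(m,p)) : hadj (A + B) = hadj A + hadj B.
Proof. by apply/matrixP=> i j; rewrite !mxE rmorphD. Qed.

Lemma hadj_sum m p k (F : 'I_k -> 'M[C]_(m,p)) : hadj (\sum_i F i) = \sum_i hadj (F i).
Proof. apply/matrixP=> i j; rewrite !mxE !summxE rmorph_sum; apply: eq_bigr => l _; by rewrite !mxE. Qed.

Lemma hadj_scalar p a : hadj (a%:M : 'M[C]_p) = a^*%:M.
Proof. by apply/matrixP=> i j; rewrite !mxE rmorphMn eq_sym. Qed.

Definition ip n (u v : 'rV[C]_n) := (u *m hadj v) 0 0.
Definition n2 n (u : 'rV[C]_n) := ip u u.

Lemma ipE n (u v : 'rV[C]_n) : ip u v = \sum_j u 0 j * (v 0 j)^*.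
Proof. by rewrite /ip mxE; apply: eq_bigr => j _; rewrite !mxE. Qed.

Lemma n2E n (u : 'rV[C]_n) : n2 u = \sum_j `|u 0 j| ^+ 2.
Proof. by rewrite /n2 ipE; apply: eq_bigr => j _; rewrite normCK. Qed.

Lemma n2_ge0 n (u : 'rV[C]_n) : 0 <= n2 u.
Proof. by rewrite n2E sumr_ge0 // => j _; rewrite exprn_ge0. Qed.

Lemma n2_eq0 n (u : 'rV[C]_n) : (n2 u == 0) = (u == 0).
Proof.
apply/eqP/eqP => [H|->]; last by rewrite n2E big1 // => j _; rewrite mxE normr0 expr0n.
move: H; rewrite n2E => /psumr_eq0P H; apply/rowP => j; rewrite mxE.
have := H (fun j _ => exprn_ge0 2 (normr_ge0 _)) j isT.
by move/eqP; rewrite sqrf_eq0 normr_eq0 => /eqP.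
Qed.

Lemma CS_fin (I : finType) (a b : I -> C) :
  `|\sum_k a k * (b k)^*| ^+ 2 <= (\sum_k `|a k| ^+ 2) * (\sum_k `|b k| ^+ 2).
Proof.
pose u := \row_(k < #|I|) a (enum_val k).
pose v := \row_(k < #|I|) b (enum_val k).
have E (x y : 'rV[C]_#|I|) : @dotmx C #|I| x y = ip x y by rewrite dotmxE.
have : `|ip u v| ^+ 2 <= ip u u * ip v v.
  by rewrite -!E; exact: (@CauchySchwarz C _ (@dotmx C #|I|) u v).1.
rewrite !ipE.
have F (f : I -> C) : \sum_(j < #|I|) f (enum_val j) = \sum_k f k by rewrite (big_enum_val f).
rewrite -F -[\sum_k `|a k| ^+ 2]F -[\sum_k `|b k| ^+ 2]F.
by congr (_ <= _); [congr (`|_| ^+ 2) | congr (_ * _)]; apply: eq_bigr => j _; rewrite !mxE ?normCK.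
Qed.

Lemma CS_vec m n (x y : 'I_m -> 'rV[C]_n) :
  `|\sum_i ip (x i) (y i)| ^+ 2 <= (\sum_i n2 (x i)) * (\sum_i n2 (y i)).
Proof.
have e1 : \sum_i ip (x i) (y i) = \sum_(p : 'I_m * 'I_n) x p.1 0 p.2 * (y p.1 0 p.2)^*.
  rewrite (eq_bigr (fun i => \sum_j x i 0 j * (y i 0 j)^*)); last by move=> i _; rewrite ipE.
  by rewrite pair_bigA.
have e2 (z : 'I_m -> 'rV[C]_n) : \sum_i n2 (z i) = \sum_(p : 'I_m * 'I_n) `|z p.1 0 p.2| ^+ 2.
  rewrite (eq_bigr (fun i => \sum_j `|z i 0 j| ^+ 2)); last by move=> i _; rewrite n2E.
  by rewrite pair_bigA.
rewrite e1 !e2; exact: (CS_fin (fun p : 'I_m * 'I_n => x p.1 0 p.2)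
   (fun p => y p.1 0 p.2)).
Qed.

Lemma ex_max_seq (s : seq C) x : all (fun y => y \is Num.real) (x :: s) ->
  exists2 y, y \in x :: s & forall z, z \in x :: s -> z <= y.
Proof.
elim: s x => [|a s IH] x /=.
  by move=> _; exists x; rewrite ?mem_seq1 // => z; rewrite mem_seq1 => /eqP ->.
case/and3P => xr ar sr.
have As : all (fun y => y \is Num.real) (a :: s) by rewrite /= ar sr.
have [y yin ymax] := IH a As.
have yr := allP As y yin.
have /orP[xy|yx] := real_leVge xr yr.
  exists y; first by rewrite in_cons yin orbT.
  by move=> z; rewrite in_cons => /orP[/eqP->|/ymax].
exists x; first by rewrite in_cons eqxx.
move=> z; rewrite in_cons => /orP[/eqP->//|/ymax zy]; exact: le_trans zy yx.
Qed.

Lemma ex_max_fun n (d : 'I_n -> C) (i0 : 'I_n) : (forall k, d k \is Num.real) ->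
  exists k0, forall k, d k <= d k0.
Proof.
move=> dr; have := @ex_max_seq (map d (enum 'I_n)) (d i0).
case.
  by rewrite /= dr; apply/allP => y /mapP [k _ ->].
move=> y; rewrite in_cons => /orP[/eqP->|/mapP[k0 _ ->]] ymax;
  [exists i0|exists k0] => k; apply: ymax; by rewrite in_cons map_f ?orbT // mem_enum.
Qed.

Lemma sum_delta n (f : 'I_n -> C) k :
  \sum_j f j * `|row k (1%:M : 'M[C]_n) 0 j| ^+ 2 = f k.
Proof.
rewrite (bigD1 k) //= big1 ?addr0; first by rewrite !mxE eqxx normr1 expr1n mulr1.
by move=> j /negbTE jk; rewrite !mxE eq_sym jk normr0 expr0n mulr0.
Qed.

Lemma SP n (Y : 'M[C]_n) (i0 : 'I_n) : exists s (v : 'rV[C]_n),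
  [/\ n2 v = 1, n2 (v *m Y) = s & forall w, n2 (w *m Y) <= s * n2 w].
Proof.
pose P := Y *m hadj Y.
have hP : hadj P = P by rewrite /P hadjM hadjK.
have nP : P \is normalmx.
  by apply/normalmxP; change (P *m hadj P = hadj P *m P); rewrite hP.
have /orthomx_spectralP PE := nP.
set U := spectralmx P in PE; set d := spectral_diag P in PE.
have Uu : U \is unitarymx := spectral_unitarymx P.
have iU : invmx U = hadj U := invmx_unitary Uu.
have UU : U *m hadj U = 1%:M := elimT unitarymxP Uu.
have UU' : hadj U *m U = 1%:M by rewrite -iU mulVmx // spectral_unit.
have PE' : P = hadj U *m diag_mx d *m U by rewrite -iU.
have key w : n2 (w *m Y) = \sum_j d 0 j * `|(w *m hadj U) 0 j| ^+ 2.
  rewrite /n2 /ip hadjM mulmxA -(mulmxA w) -/P PE'.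
  have -> : w *m (hadj U *m diag_mx d *m U) *m hadj w =
     (w *m hadj U) *m diag_mx d *m hadj (w *m hadj U).
    by rewrite hadjM hadjK !mulmxA.
  rewrite mxE; apply: eq_bigr => j _.
  by rewrite mul_mx_diag !mxE normCK mulrAC mulrC.
have n2z w : n2 (w *m hadj U) = n2 w.
  by rewrite /n2 /ip hadjM hadjK mulmxA -(mulmxA w) UU' mulmx1.
have dk k : d 0 k = n2 (row k U *m Y).
  by rewrite key -row_mul UU sum_delta.
have [k0 Hk] := ex_max_fun (d:=fun k => d 0 k) i0
  (fun k => ger0_real (eq_ind_r (fun x => 0 <= x) (n2_ge0 _) (dk k))).
exists (d 0 k0), (row k0 U); split.
- rewrite -n2z -row_mul UU n2E.
  rewrite -[RHS](@sum_delta _ (fun _ => 1) k0); apply: eq_bigr => j _; by rewrite mul1r.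
- by rewrite dk.
move=> w; rewrite key -n2z n2E mulr_sumr; apply: ler_sum => j _.
by apply: ler_wpM2r; [exact: exprn_ge0 | exact: Hk].
Qed.

Lemma n2Z n a (x : 'rV[C]_n) : n2 (a *: x) = `|a| ^+ 2 * n2 x.
Proof. by rewrite /n2 /ip hadjZ -scalemxAl -scalemxAr mxE mxE mulrA -normCK. Qed.

Lemma ML n m (W : 'I_m -> 'M[C]_n) (c mu : C) (Y : 'M[C]_n) :
  \sum_i W i *m hadj (W i) = c%:M ->
  Y != 0 ->
  \sum_i W i *m Y *m hadj (W i) = mu *: Y ->
  `|mu| <= c.
Proof.
case: n W Y => [|n] W Y HW.
  by move=> /negP[]; apply/eqP; rewrite flatmx0.
move=> Y0 HY.
have [s [v [v1 vs smax]]] := SP Y ord0.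
have hsum u : \sum_i n2 (u *m W i) = c * n2 u.
  transitivity ((u *m (\sum_i W i *m hadj (W i)) *m hadj u) 0 0).
    rewrite mulmx_sumr mulmx_suml summxE; apply: eq_bigr => i _.
    by rewrite /n2 /ip hadjM !mulmxA.
  by rewrite HW mul_mx_scalar -scalemxAl mxE.
have c0 : 0 <= c.
  by rewrite -[c]mulr1 -v1 -hsum sumr_ge0 // => i _; exact: n2_ge0.
have s0 : 0 <= s by rewrite -vs n2_ge0.
have sp : 0 < s.
  rewrite lt_def s0 andbT; apply: contraNneq Y0 => s0'.
  apply/eqP/row_matrixP => i; rewrite row0 rowE; apply/eqP.
  rewrite -n2_eq0 eq_le n2_ge0 andbT; apply: le_trans (smax _) _.
  by rewrite s0' mul0r.
have [->|mu0] := eqVneq mu 0; first by rewrite normr0.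
set u := v *m (mu *: Y).
have n2u : n2 u = `|mu| ^+ 2 * s by rewrite /u -scalemxAr n2Z vs.
have up : 0 < n2 u by rewrite n2u mulr_gt0 // exprn_gt0 // normr_gt0.
have idu : n2 u = \sum_i ip (v *m W i *m Y) (u *m W i).
  transitivity ((v *m (\sum_i W i *m Y *m hadj (W i)) *m hadj u) 0 0).
    by rewrite HY.
  rewrite mulmx_sumr mulmx_suml summxE; apply: eq_bigr => i _.
  by rewrite /ip hadjM !mulmxA.
have cs := CS_vec (fun i => v *m W i *m Y) (fun i => u *m W i).
rewrite -idu hsum ger0_norm ?n2_ge0 // in cs.
have b1 : \sum_i n2 (v *m W i *m Y) <= s * c.
  rewrite -[s * c]mulr1 -v1 -mulrA -hsum mulr_sumr; apply: ler_sum => i _.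
  exact: smax.
have cs2 : n2 u ^+ 2 <= (s * c) * (c * n2 u).
  apply: le_trans cs _; apply: ler_wpM2r => //.
  by rewrite mulr_ge0 // n2_ge0.
have cs3 : n2 u <= s * c ^+ 2.
  by rewrite -(ler_pM2r up) -expr2 (le_trans cs2) // expr2 !mulrA.
rewrite n2u mulrC expr2 in cs3.
have : `|mu| ^+ 2 <= c ^+ 2 by rewrite -(ler_pM2l sp) expr2.
by rewrite ler_sqr // nnegrE.
Qed.

End S.

Lemma fin_alg (C : numClosedFieldType) (lam a : C) :
  0 < a -> `|lam| = 1 -> `|lam - a| <= 1 - a -> lam = 1.
Proof.
move=> a0 l1 h.
have ar : a^* = a := conj_Creal (gtr0_real a0).
have ll : lam * lam^* = 1 by rewrite -normCK l1 expr1n.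
have h1 : 0 <= 1 - a := le_trans (normr_ge0 _) h.
have h2 : `|lam - a| ^+ 2 <= (1 - a) ^+ 2 by rewrite ler_sqr ?nnegrE.
set q := lam + lam^*.
have e1 : `|lam - a| ^+ 2 = 1 - a * q + a ^+ 2.
  have cB : (lam - a)^* = lam^* - a by rewrite rmorphB; congr (_ - _); exact: ar.
  rewrite normCK cB /q.
  transitivity (lam * lam^* - a * (lam + lam^*) + a ^+ 2); first by ring.
  by rewrite ll.
have e2 : (1 - a) ^+ 2 = 1 - a * 2 + a ^+ 2 by ring.
rewrite e1 e2 lerD2r lerD2l lerN2 ler_pM2l // in h2.
have e3 : `|lam - 1| ^+ 2 = 2 - q.
  have cB : (lam - 1)^* = lam^* - 1 by rewrite rmorphB rmorph1.
  rewrite normCK cB /q.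
  transitivity (lam * lam^* + 1 - (lam + lam^*)); first by ring.
  by rewrite ll; ring.
have : `|lam - 1| ^+ 2 <= 0 by rewrite e3 subr_le0.
move=> H; have : `|lam - 1| ^+ 2 == 0 by rewrite eq_le H exprn_ge0.
by rewrite sqrf_eq0 normr_eq0 subr_eq0 => /eqP.
Qed.

Definition Phi (C : numClosedFieldType) n m (V : 'I_m -> 'M[C]_n) (Y : 'M[C]_n) : 'M[C]_n :=
  \sum_i adjmx (V i) *m Y *m V i.

Definition Gf (C : numClosedFieldType) n m (V : 'I_m -> 'M[C]_n) (lam : C) (Y : 'M[C]_n) : 'M[C]_n :=
  Phi V Y - lam *: Y.

Lemma Gf_lin (C : numClosedFieldType) n m (V : 'I_m -> 'M[C]_n) (lam : C) :
  linear (Gf V lam).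
Proof.
move=> a x y; rewrite /Gf /Phi.
have -> : \sum_i adjmx (V i) *m (a *: x + y) *m V i =
  a *: (\sum_i adjmx (V i) *m x *m V i) + \sum_i adjmx (V i) *m y *m V i.
  rewrite scaler_sumr -big_split /=; apply: eq_bigr => i _.
  by rewrite mulmxDr mulmxDl -scalemxAr -scalemxAl.
set A := \sum_i _; set B := \sum_i _.
rewrite scalerBr scalerDr scalerA mulrC -scalerA.
set P := a *: A; set Q := a *: (lam *: x); set R := lam *: y.
by rewrite addrACA opprD.
Qed.

HB.instance Definition _ (C : numClosedFieldType) n m (V : 'I_m -> 'M[C]_n) (lam : C) :=
  GRing.isLinear.Build C 'M[C]_n 'M[C]_n _ (Gf V lam) (@Gf_lin C n m V lam).

Lemma pairing (C : numClosedFieldType) n m (V : 'I_m -> 'M[C]_n) (Y X : 'M[C]_n) :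
  \tr (Y *m kraus_map V X) = \tr (Phi V Y *m X).
Proof.
rewrite /kraus_map /Phi mulmx_sumr mulmx_suml !raddf_sum; apply: eq_bigr => i _.
change (\tr (Y *m (V i *m X *m adjmx (V i))) = \tr (adjmx (V i) *m Y *m V i *m X)).
by rewrite !mulmxA mxtrace_mulC !mulmxA.
Qed.

Lemma trace_adj (C : numClosedFieldType) n (X : 'M[C]_n) :
  \tr (hadj X *m X) = \sum_i n2 (row i X).
Proof.
rewrite mxtrace_mulC /mxtrace; apply: eq_bigr => i _.
by rewrite /n2 /ip !mxE; apply: eq_bigr => j _; rewrite !mxE.
Qed.

Lemma DS (C : numClosedFieldType) n m (V : 'I_m -> 'M[C]_n) (lam : C) (X : 'M[C]_n) :
  X != 0 -> kraus_map V X = lam *: X -> exists2 Y, Y != 0 & Phi V Y = lam *: Y.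
Proof.
move=> X0 EX.
pose M := lin_mx (Gf V lam).
have [/det0P [w w0 wM]| dM] := boolP (\det M == 0).
  exists (vec_mx w).
    apply: contraNneq w0 => h; by rewrite -[w]vec_mxK h linear0.
  have : mxvec (Gf V lam (vec_mx w)) = 0 by rewrite -mul_rV_lin wM.
  move=> /(congr1 vec_mx); rewrite mxvecK linear0 /Gf => /eqP.
  by rewrite subr_eq0 => /eqP.
have Mu : M \in unitmx by rewrite unitmxE unitfE.
pose w := mxvec (hadj X) *m invmx M.
have GY : Gf V lam (vec_mx w) = hadj X.
  by apply: (can_inj mxvecK); rewrite -mul_rV_lin mulmxKV.
have : \tr (hadj X *m X) = 0.
  rewrite -GY /Gf mulmxBl linearB /= -pairing EX -scalemxAl -scalemxAr !linearZ /=.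
  by rewrite subrr.
rewrite trace_adj => /psumr_eq0P H.
case/negP: X0; apply/eqP/row_matrixP => i; rewrite row0; apply/eqP.
by rewrite -n2_eq0 H // => j _; exact: n2_ge0.
Qed.

Theorem lemma2 (C : numClosedFieldType) (n m : nat)
  (V : 'I_m.+1 -> 'M[C]_n) (alpha : C) :
  kraus_trace_preserving V ->
  0 < alpha ->
  V ord0 = (sqrtC alpha)%:M ->
  forall lambda : C, `|lambda| = 1 ->
    is_eigenvalue (kraus_map V) lambda -> lambda = 1.
Proof.
move=> TP a0 V0 lam l1 [X X0 EX].
have [Y Y0 PY] := DS X0 EX.
set r := sqrtC alpha in V0.
have r0 : 0 <= r by rewrite sqrtC_ge0 ltW.
have rc : r^* = r := conj_Creal (ger0_real r0).
have rr : r * r = alpha by rewrite -expr2 sqrtCK.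
have adjV0 : adjmx (V ord0) = r%:M.
  rewrite V0; change (hadj (r%:M : 'M[C]_n) = r%:M); rewrite hadj_scalar.
  by congr (_%:M); exact: rc.
pose W i := adjmx (V (lift ord0 i)).
have hW i : hadj (W i) = V (lift ord0 i) by rewrite /W; exact: hadjK.
apply: (fin_alg a0 l1).
apply: (@ML C n m W (1 - alpha) (lam - alpha) Y).
- move: TP; rewrite /kraus_trace_preserving big_ord_recl adjV0 V0 -scalar_mxM rr.
  move=> H.
  have -> : (1 - alpha)%:M = 1%:M - alpha%:M :> 'M[C]_n.
    by apply/matrixP => i j; rewrite !mxE mulrnBl.
  rewrite -H [alpha%:M + _]addrC addrK; apply: eq_bigr => i _; by rewrite hW.
- exact: Y0.
- move: PY; rewrite /Phi big_ord_recl adjV0 V0 mul_scalar_mx -scalemxAl mul_mx_scalar scalerA rr.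
  move=> H; rewrite scalerBl -H [alpha *: Y + _]addrC addrK.
  apply: eq_bigr => i _; by rewrite hW.
Qed.
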